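(* Let $P$ be a planar convex polygon with vertices $P_1,\dots,P_{2n}$ (indices modulo $2n$) having parallel opposite sides, i.e. the segment $P_iP_{i+1}$ is parallel to $P_{i+n}P_{i+n+1}$ for $1\le i\le n$. Fix a point $Z$ and a number $a>0$, and let $U$ be the polygon with vertices $$U_i=Z+\frac{1}{2a}\left(P_i-P_{i+n}\right),\qquad 1\le i\le 2n.$$ Then $U$ is convex, symmetric with respect to $Z$, and $U_{i+1}-U_i\parallel P_{i+1}-P_i$ and $U_i-Z\parallel P_i-P_{i+n}$ for $1\le i\le n$. Moreover, $U$ is the unique polygon $\{U_1,\dots,U_{2n}\}$ with the given first vertex $U_1=Z+\frac1{2a}(P_1-P_{1+n})$ having these properties. *)

(* Defs.v *)
From HB Require Import structures.
From mathcomp Require Import all_boot all_order all_algebra.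
Set Implicit Arguments. Unset Strict Implicit. Unset Printing Implicit Defensive.
Import Order.TTheory GRing.Theory Num.Theory.
Local Open Scope ring_scope.

Definition cross (R : realFieldType) (u v : 'rV[R]_2) : R :=
  u ord0 ord0 * v ord0 ord_max - u ord0 ord_max * v ord0 ord0.

Definition parallel (R : realFieldType) (u v : 'rV[R]_2) : Prop := cross u v = 0.

(* Polygons are given as nat-indexed vertex sequences, periodic mod m. *)
Definition convex_polygon (R : realFieldType) (m : nat) (P : nat -> 'rV[R]_2) : Prop :=
  exists s : R, (s = 1 \/ s = -1) /\
    forall i j : nat, (j %% m != i %% m)%N -> (j %% m != i.+1 %% m)%N ->
      0 < s * cross (P i.+1 - P i) (P j - P i).

Definition symmetric_about (R : realFieldType) (n : nat) (Z : 'rV[R]_2)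
  (V : nat -> 'rV[R]_2) : Prop :=
  forall i : nat, V (i + n)%N - Z = - (V i - Z).

Definition U_props (R : realFieldType) (n : nat) (P : nat -> 'rV[R]_2)
  (Z : 'rV[R]_2) (V : nat -> 'rV[R]_2) : Prop :=
  [/\ convex_polygon (2 * n) V,
      symmetric_about n Z V &
      forall i : nat, (1 <= i <= n)%N ->
        parallel (V i.+1 - V i) (P i.+1 - P i) /\
        parallel (V i - Z) (P i - P (i + n)%N)].

(* Main.v *)
Require Import Defs.
From HB Require Import structures.
From mathcomp Require Import all_boot all_order all_algebra.
From mathcomp Require Import ring lra zify.
Import Order.TTheory GRing.Theory Num.Theory.
Local Open Scope ring_scope.
Set Implicit Arguments. Unset Strict Implicit.

Lemma crossBl (R : realFieldType) (u v w : 'rV[R]_2) : cross (u - v) w = cross u w - cross v w.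
Proof. rewrite /cross !mxE; ring. Qed.
Lemma crossBr (R : realFieldType) (u v w : 'rV[R]_2) : cross w (u - v) = cross w u - cross w v.
Proof. rewrite /cross !mxE; ring. Qed.
Lemma crossZl (R : realFieldType) (c : R) (u w : 'rV[R]_2) : cross (c *: u) w = c * cross u w.
Proof. rewrite /cross !mxE; ring. Qed.
Lemma crossZr (R : realFieldType) (c : R) (u w : 'rV[R]_2) : cross w (c *: u) = c * cross w u.
Proof. rewrite /cross !mxE; ring. Qed.
Lemma crossC (R : realFieldType) (u w : 'rV[R]_2) : cross u w = - cross w u.
Proof. rewrite /cross; ring. Qed.
Lemma crossxx (R : realFieldType) (u : 'rV[R]_2) : cross u u = 0.
Proof. rewrite /cross; ring. Qed.
Lemma cross_pl (R : realFieldType) (u v x y : 'rV[R]_2) : cross u v = 0 ->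
  cross u x * cross v y = cross v x * cross u y.
Proof.
move=> H; apply/eqP; rewrite -subr_eq0; apply/eqP.
have -> : cross u x * cross v y - cross v x * cross u y = cross u v * cross x y.
  rewrite /cross; ring.
by rewrite H mul0r.
Qed.
Lemma cross_zero (R : realFieldType) (d u v : 'rV[R]_2) : cross d u = 0 -> cross d v = 0 ->
  cross u v != 0 -> d = 0.
Proof.
move=> H1 H2 H3; apply/rowP => k; rewrite mxE.
have Ek (j : 'I_2) : cross u v * d ord0 j = cross d v * u ord0 j - cross d u * v ord0 j.
  have : (j == ord0) || (j == ord_max) by case: j => [[|[|]]].
  by case/orP => /eqP ->; rewrite /cross; ring.
have := Ek k; rewrite H1 H2 !mul0r subr0 => /eqP; rewrite mulf_eq0 (negbTE H3) /=.
by move=> /eqP.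
Qed.
Lemma key (R : realFieldType) (a1 a2 b1 b2 al be : R) : 0 < a1 -> 0 <= b2 -> 0 < al -> 0 < be ->
  a2 * (- be) = b2 * al -> a1 * (- be) = b1 * al -> 0 < a1 - a2 - b1 + b2.
Proof.
move=> h1 h2 h3 h4 e1 e2.
have ha2 : a2 <= 0.
  have : a2 * be <= 0 by have := mulr_ge0 h2 (ltW h3); lra.
  by rewrite pmulr_lle0.
have hb1 : b1 < 0.
  have : b1 * al < 0 by have := mulr_gt0 h1 h4; lra.
  by rewrite pmulr_llt0.
lra.
Qed.
Lemma perE (T : Type) (m : nat) (f : nat -> T) : (forall i, f (i + m)%N = f i) ->
  forall i, f i = f (i %% m)%N.
Proof.
move=> H i; rewrite {1}(divn_eq i m); elim: (i %/ m)%N => [|q IH]; first by rewrite mul0n add0n.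
have -> : (q.+1 * m + i %% m = (q * m + i %% m) + m)%N by rewrite mulSn; lia.
by rewrite H.
Qed.
Local Close Scope ring_scope.
Lemma m1 n i : (2<=n)%N -> ((i+n) %% (2*n) != i %% (2*n))%N.
Proof.
move=> hn; rewrite -[X in _ != X %% _]addn0 eqn_modDl modn_small ?mod0n; lia.
Qed.
Lemma m2 n i : (2<=n)%N -> ((i+n) %% (2*n) != i.+1 %% (2*n))%N.
Proof.
move=> hn; rewrite -(addn1 i) eqn_modDl !modn_small; lia.
Qed.
Lemma m3 n i : (2<=n)%N -> (i %% (2*n) != (i+n).+1 %% (2*n))%N.
Proof.
move=> hn; rewrite -[X in X %% _ != _]addn0 -addnS eqn_modDl mod0n modn_small; lia.
Qed.
Lemma m4 n i : (2<=n)%N -> (i %% (2*n) != (i+n) %% (2*n))%N.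
Proof. by move=> hn; rewrite eq_sym m1. Qed.
Local Open Scope ring_scope.
Lemma cross0r (R : realFieldType) (u : 'rV[R]_2) : cross u 0 = 0.
Proof. rewrite /cross !mxE; ring. Qed.
Lemma crossNr (R : realFieldType) (u v : 'rV[R]_2) : cross u (- v) = - cross u v.
Proof. rewrite /cross !mxE; ring. Qed.

Theorem lemma2p1 (R : realFieldType) (n : nat) (P : nat -> 'rV[R]_2)
  (Z : 'rV[R]_2) (a : R) :
  (2 <= n)%N ->
  (forall i : nat, P (i + 2 * n)%N = P i) ->
  convex_polygon (2 * n) P ->
  (forall i : nat, (1 <= i <= n)%N ->
     parallel (P i.+1 - P i) (P (i + n).+1 - P (i + n)%N)) ->
  0 < a ->
  let U := fun i : nat => Z + (2 * a)^-1 *: (P i - P (i + n)%N) in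
  U_props n P Z U /\
  (forall V : nat -> 'rV[R]_2,
     (forall i : nat, V (i + 2 * n)%N = V i) ->
     V 1%N = U 1%N ->
     U_props n P Z V ->
     forall i : nat, V i = U i).
Proof.
move=> hn Pper [s [hs HP]] Hpar ha U.
have perP := perE Pper.
have weak : forall k j, 0 <= s * cross (P k.+1 - P k) (P j - P k).
  move=> k j; case: (eqVneq (j %% (2*n)) (k %% (2*n)))%N => e1.
    by rewrite (perP j) e1 -perP subrr cross0r mulr0.
  case: (eqVneq (j %% (2*n)) (k.+1 %% (2*n)))%N => e2.
    by rewrite (perP j) e2 -perP crossxx mulr0.
  exact: ltW (HP _ _ e1 e2).
have parA : forall i, cross (P i.+1 - P i) (P (i+n).+1 - P (i+n)%N) = 0.
  pose Q i := cross (P i.+1 - P i) (P (i+n).+1 - P (i+n)%N).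
  have Qper : forall i, Q (i + 2*n)%N = Q i.
    move=> i; rewrite /Q.
    have -> : ((i+2*n).+1 = i.+1 + 2*n)%N by lia.
    have -> : (i + 2*n + n = (i+n) + 2*n)%N by lia.
    have -> : (((i+n) + 2*n).+1 = (i+n).+1 + 2*n)%N by lia.
    by rewrite !Pper.
  move=> i; rewrite -/(Q i) (perE Qper).
  have hr : (i %% (2*n) < 2*n)%N by rewrite ltn_pmod //; lia.
  move: (i %% (2*n))%N hr => r hr.
  case r0: (r == 0)%N.
    move/eqP: r0 => ->; rewrite /Q add0n.
    have := Hpar n ltac:(lia); rewrite /parallel.
    have -> : ((n+n).+1 = 1 + 2*n)%N by lia.
    have -> : ((n+n) = 0 + 2*n)%N by lia.
    by rewrite !Pper => h; rewrite crossC h oppr0.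
  case: (leqP r n) => hrn.
    by apply: Hpar; apply/andP; split => //; lia.
  have -> : r = ((r - n) + n)%N by lia.
  have := Hpar (r - n)%N ltac:(lia); rewrite /parallel /Q.
  have -> : ((r - n + n + n).+1 = (r - n).+1 + 2*n)%N by lia.
  have -> : ((r - n + n + n) = (r - n) + 2*n)%N by lia.
  by rewrite !Pper => h; rewrite crossC h oppr0.
set c := (2 * a)^-1.
have hc : 0 < c by rewrite /c invr_gt0; lra.
have EU : forall k l, U k - U l = c *: ((P k - P l) - (P (k+n)%N - P (l+n)%N)).
  by move=> k l; rewrite /U /c; apply/rowP => t; rewrite !mxE; ring.
have EZ : forall k, U k - Z = c *: (P k - P (k+n)%N).
  by move=> k; rewrite /U /c; apply/rowP => t; rewrite !mxE; ring.
have Uprops : U_props n P Z U.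
  split.
  - exists s; split => // i j e1 e2.
    rewrite !EU addSn crossZl crossZr.
    set A := P i.+1 - P i.
    set B := P (i+n).+1 - P (i+n)%N.
    set D1 := P j - P i.
    set D2 := P (j+n)%N - P (i+n)%N.
    set X := P (i+n)%N - P i.
    set Y := P i - P (i+n)%N.
    rewrite crossBl !(crossBr D1 D2).
    have hXY : Y = - X by rewrite /X /Y opprB.
    have ha1 : 0 < s * cross A D1 by exact: HP.
    have hb2 : 0 <= s * cross B D2.
      rewrite /B /D2.
      exact: weak.
    have hal : 0 < s * cross A X by apply: HP; [exact: m1|exact: m2].
    have hbe : 0 < s * cross B Y by apply: HP; [exact: m4|exact: m3].
    have hAY : cross A Y = - cross A X by rewrite hXY crossNr.
    have pl := fun x y => cross_pl x y (parA i).
    have E1 : (s * cross A D2) * (- (s * cross B Y)) = (s * cross B D2) * (s * cross A X).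
      move: (pl D2 Y); rewrite hAY => E.
      transitivity (- (s*s) * (cross A D2 * cross B Y)); first by ring.
      by rewrite E; ring.
    have E2 : (s * cross A D1) * (- (s * cross B Y)) = (s * cross B D1) * (s * cross A X).
      move: (pl D1 Y); rewrite hAY => E.
      transitivity (- (s*s) * (cross A D1 * cross B Y)); first by ring.
      by rewrite E; ring.
    have K := key ha1 hb2 hal hbe E1 E2.
    have -> : s * (c * (c * (cross A D1 - cross A D2 - (cross B D1 - cross B D2)))) =
      (c * c) * (s * cross A D1 - s * cross A D2 - s * cross B D1 + s * cross B D2) by ring.
    by rewrite pmulr_rgt0 // mulr_gt0.
  - move=> i; rewrite !EZ.
    have -> : (i + n + n = i + 2 * n)%N by lia.
    by rewrite Pper; apply/rowP => t; rewrite !mxE; ring.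
  - move=> i _; split; rewrite /parallel.
      rewrite EU addSn crossZl crossBl crossxx (crossC (P (i+n).+1 - _)) parA; ring.
    by rewrite EZ crossZl crossxx mulr0.
split => // V Vper V1 [_ Vsym Vpar] i.
have hcr : forall k, cross (P k.+1 - P k) (P k.+1 - P (k.+1 + n)%N) != 0.
  move=> k; have h := HP k (k.+1 + n)%N.
  rewrite addSn in h *.
  have := h ltac:(by rewrite eq_sym m3) ltac:(by rewrite -addSn m1).
  rewrite (_ : P k.+1 - P (k+n).+1 = (P k.+1 - P k) - (P (k+n).+1 - P k)); last first.
    by apply/rowP => t; rewrite !mxE; ring.
  rewrite (crossBr (P k.+1 - P k) (P (k+n).+1 - P k)) crossxx sub0r => hp; apply/eqP => e.
  by move: hp; rewrite -[cross _ _]opprK e oppr0 mulr0 ltxx.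
have [_ Usym Upar] := Uprops.
have low : forall k, (k < n)%N -> V k.+1 = U k.+1.
  elim=> [|k IH] hk; first by [].
  have Vk := IH ltac:(lia).
  have [pv _] := Vpar k.+1 ltac:(lia).
  have [_ pv2] := Vpar k.+2 ltac:(lia).
  have [pu _] := Upar k.+1 ltac:(lia).
  have [_ pu2] := Upar k.+2 ltac:(lia).
  apply/eqP; rewrite -subr_eq0; apply/eqP.
  apply: (cross_zero _ _ (hcr k.+1)).
    rewrite (_ : V k.+2 - U k.+2 = (V k.+2 - V k.+1) - (U k.+2 - U k.+1)); last first.
      by rewrite Vk opprB addrA subrK.
    by rewrite crossBl pv pu subrr.
  rewrite (_ : V k.+2 - U k.+2 = (V k.+2 - Z) - (U k.+2 - Z)); last first.
    by rewrite opprB addrA subrK.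
  by rewrite crossBl pv2 pu2 subrr.
have all2 : forall k, (1 <= k <= 2 * n)%N -> V k = U k.
  move=> k /andP[k1 k2]; case: (leqP k n) => hk.
    have -> : k = (k.-1).+1 by lia.
    apply: low; lia.
  have -> : k = ((k - n) + n)%N by lia.
  have e : V (k - n + n)%N - Z = U (k - n + n)%N - Z.
    rewrite Vsym Usym; have -> : (k - n = (k-n-1).+1)%N by lia.
    by rewrite low //; lia.
  by move/(congr1 (fun x => x + Z)): e; rewrite !subrK.
have Uper : forall j, U (j + 2*n)%N = U j.
  move=> j; rewrite /U; have -> : (j + 2*n + n = (j+n) + 2*n)%N by lia.
  by rewrite !Pper.
rewrite (perE Vper) (perE Uper).
have hr : (i %% (2*n) < 2*n)%N by rewrite ltn_pmod //; lia.
case r0: (i %% (2*n) == 0)%N.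
  rewrite (eqP r0) -[V 0%N](Vper 0%N) -[U 0%N](Uper 0%N) add0n.
  apply: all2; lia.
apply: all2; apply/andP; split; [by rewrite lt0n r0 | exact: ltnW].
Qed.
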